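(* Assume that $a(\cdot)\in B^q_\theta$ for $0<\theta\leq\frac{\pi}{2}$ and let $F\in\mathcal{L}(D(\mathbb{A}),X)$ be $p$-admissible for $\mathbb{A}$, with admissibility constant $\gamma=\gamma(\alpha)$, i.e. $\int_0^\alpha\|F\mathbb{T}(t)x\|^p\,dt\le\gamma^p\|x\|^p$ for $x\in D(\mathbb{A})$. Then \begin{align*} \int^\alpha_0 \left\|\mathscr{P}\mathscr{T}(t)\begin{pmatrix} x\\ f\end{pmatrix}\right\|^p dt\le 2^{p-1}\left( \|a\|_{B_{\theta}^q}^p\gamma^p \|x\|^p_X+\int^\alpha_0\|f(t)\|^p dt\right) \end{align*} for all $\alpha>0$ and $\begin{pmatrix} x\\ f\end{pmatrix}\in D(\mathscr{A})$.
   Context: $X$ is a Banach space, $p\in(1,\infty)$, $q\in(1,\infty)$, and $\mathbb{A}:D(\mathbb{A})\subset X\to X$ generates a $C_0$-semigroup $\mathbb{T}=(\mathbb{T}(t))_{t\ge0}$ on $X$; $a$ is a scalar function. For $0<\theta\le\pi/2$, $\Sigma_\theta=\{\lambda\in\mathbb{C}:|\arg\lambda|<\theta\}$ and $B^q_{\theta,X}$ is the Bergman space of holomorphic $f:\Sigma_\theta\to X$ with $\|f\|_{B^q_{\theta,X}}=(\int_{\Sigma_\theta}\|f(\tau+i\sigma)\|_X^q\,d\tau\,d\sigma)^{1/q}<\infty$; $B^q_\theta:=B^q_{\theta,\mathbb{C}}$. The state space is $\mathscr{X}^q=X\times B^q_{\theta,X}$ with norm $\|x\|_X+\|f\|_{B^q_{\theta,X}}$.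 $\Upsilon x:=a(\cdot)Fx$ for $x\in D(\mathbb{A})$. $\mathscr{A}=\mathrm{diag}(\mathbb{A},\frac{d}{dz})$ with $D(\mathscr{A})=D(\mathbb{A})\times D(\frac{d}{dz})$, generating $\mathscr{T}(t)=\mathrm{diag}(\mathbb{T}(t),\mathbb{S}(t))$ where $(\mathbb{S}(t)f)(s)=f(t+s)$ is the left shift semigroup; $\mathscr{P}=\begin{pmatrix}0&\delta_0\\ \Upsilon&0\end{pmatrix}$ with $D(\mathscr{P})=D(\mathscr{A})$, $\delta_0 f=f(0)$. *)

(* Defs.v *)
From HB Require Import structures.
From mathcomp Require Import all_boot all_order all_algebra.
From mathcomp Require Import all_classical all_reals all_analysis.
From mathcomp Require Export complex.
Import Order.TTheory GRing.Theory Num.Theory.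
Import numFieldNormedType.Exports.

Set Implicit Arguments.
Unset Strict Implicit.
Unset Printing Implicit Defensive.

Local Open Scope classical_set_scope.
Local Open Scope ring_scope.
Local Open Scope complex_scope.

(* The complex plane R[i], with its canonical normed (hence topological)
   structure as a normed module over itself. *)
Notation Cx R := ((complex R)^o).

Section Defs.
Variable R : realType.

(* real-valued norm of a normed R[i]-module (the library norm is R[i]-valued,
   with nonnegative real values) *)
Definition rnorm (V : normedModType R[i]) (v : V) : R := complex.Re `|v|.

Definition sector (th : R) : set (Cx R) :=
  [set z | exists r phi : R,
      0 < r /\ `|phi| < th /\ z = (r * cos phi) +i* (r * sin phi)].

Definition cdiffquot (V : normedModType R[i]) (g : Cx R -> V) (z : Cx R) :=
  fun h : Cx R => h^-1 *: (g (z + h) - g z).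

Definition holomorphic_on (V : normedModType R[i]) (U : set (Cx R))
  (g : Cx R -> V) : Prop :=
  forall z, U z -> exists l : V, cdiffquot g z @ dnbhs (0 : Cx R) --> l.

Definition bergman_int (V : normedModType R[i]) (th q : R) (g : Cx R -> V)
  : \bar R :=
  (\int[(@lebesgue_measure R) \x (@lebesgue_measure R)]_(w in
      [set w : R * R | sector th (w.1 +i* w.2)])
     ((rnorm (g (w.1 +i* w.2))) `^ q)%:E)%E.

Definition in_bergman (V : normedModType R[i]) (th q : R) (g : Cx R -> V)
  : Prop :=
  holomorphic_on (sector th) g /\ (bergman_int th q g < +oo)%E.

Definition bnorm (V : normedModType R[i]) (th q : R) (g : Cx R -> V) : R :=
  (fine (bergman_int th q g)) `^ (q^-1).

Definition shift (V : normedModType R[i]) (t : R) (f : Cx R -> V) :=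
  fun s : Cx R => f (t%:C + s).

Definition in_dom_ddz (V : normedModType R[i]) (th q : R) (f : Cx R -> V)
  : Prop :=
  in_bergman th q f /\
  exists g : Cx R -> V, in_bergman th q g /\
    (fun h : R => bnorm th q
        (fun z => (h%:C)^-1 *: (shift h f z - f z) - g z)) @ at_right 0
      --> (0 : R).

Definition C0_semigroup (X : normedModType R[i]) (T : R -> X -> X) : Prop :=
  [/\ (forall t (c : R[i]) (x y : X), 0 <= t ->
          T t (c *: x + y) = c *: T t x + T t y),
      (forall t, 0 <= t -> exists M : R, forall x, rnorm (T t x) <= M * rnorm x),
      (forall x, T 0 x = x),
      (forall t s x, 0 <= t -> 0 <= s -> T (t + s) x = T t (T s x)) &
      (forall x, (fun t => T t x) @ at_right 0 --> x)].

Definition generator (X : normedModType R[i]) (T : R -> X -> X)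
  (DA : set X) (A : X -> X) : Prop :=
  (forall x, DA x <->
     exists y : X, (fun h : R => (h%:C)^-1 *: (T h x - x)) @ at_right 0 --> y)
  /\ (forall x, DA x ->
     (fun h : R => (h%:C)^-1 *: (T h x - x)) @ at_right 0 --> A x).

Definition bounded_on_graph (X : normedModType R[i]) (DA : set X)
  (A F : X -> X) : Prop :=
  (forall (c : R[i]) x y, DA x -> DA y -> F (c *: x + y) = c *: F x + F y)
  /\ exists K : R, forall x, DA x -> rnorm (F x) <= K * (rnorm x + rnorm (A x)).

Definition st_norm (X : normedModType R[i]) (th q : R)
  (u : X * (Cx R -> X)) : R := rnorm u.1 + bnorm th q u.2.

Definition Tcal (X : normedModType R[i]) (T : R -> X -> X) (t : R)
  (u : X * (Cx R -> X)) : X * (Cx R -> X) := (T t u.1, shift t u.2).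

(* scriptP = [[0, delta_0], [Upsilon, 0]],  Upsilon x = a(.) F x *)
Definition Pcal (X : normedModType R[i]) (a : Cx R -> Cx R) (F : X -> X)
  (u : X * (Cx R -> X)) : X * (Cx R -> X) :=
  (u.2 0, fun z => a z *: F u.1).

End Defs.

(* Main.v *)
Require Import Defs.
From HB Require Import structures.
From mathcomp Require Import all_boot all_order all_algebra.
From mathcomp Require Import all_classical all_reals all_analysis.
From mathcomp Require Import complex.
From mathcomp Require Import lra measurable_realfun.
Import Order.TTheory GRing.Theory Num.Theory.
Import numFieldNormedType.Exports.
Local Open Scope classical_set_scope.
Local Open Scope ring_scope.
Local Open Scope complex_scope.

Section L.
Context {d : measure_display} {T : measurableType d} {R : realType}.
Context {mu : {measure set T -> \bar R}}.
Import HBNNSimple.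
Local Open Scope ereal_scope.

Lemma lint_le (D : set T) (f g : T -> \bar R) :
  (forall x, D x -> 0 <= f x) -> (forall x, D x -> f x <= g x) ->
  \int[mu]_(x in D) f x <= \int[mu]_(x in D) g x.
Proof.
move=> f0 fg.
have g0 : forall x, D x -> 0 <= g x by move=> x Dx; exact: le_trans (f0 _ Dx) (fg _ Dx).
rewrite !ge0_integralE //.
apply: ge_ereal_sup => _ [h /= hf <-]; apply: ereal_sup_ubound => /=.
exists h => //= x; apply: (le_trans (hf x)).
by rewrite /patch; case: ifP => // /[!inE] /fg.
Qed.

Lemma lint_scale (D : set T) (k : R) (f : T -> R) : (0 <= k)%R ->
  (forall x, D x -> 0 <= f x)%R ->
  \int[mu]_(x in D) (k * f x)%:E <= k%:E * \int[mu]_(x in D) (f x)%:E.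
Proof.
move=> k0 f0; have [->|kn0] := eqVneq k 0%R.
  rewrite mul0e (eq_integral (fun _ => 0)) ?integral0 // => x _; by rewrite mul0r.
have kp : (0 < k)%R by rewrite lt_def kn0.
rewrite !ge0_integralE //; last by move=> x Dx; rewrite lee_fin mulr_ge0 ?f0.
apply: ge_ereal_sup => _ [h /= hf <-].
have ki : (0 <= k^-1)%R by rewrite invr_ge0.
pose h' := scale_nnsfun h ki.
have -> : sintegral mu h = k%:E * sintegral mu h'.
  rewrite -sintegralrM; apply: eq_sintegral => x.
  by rewrite /h' /= mulrA mulfV ?mul1r.
apply: lee_wpmul2l; first by rewrite lee_fin.
  apply: ereal_sup_ubound => /=; exists h' => //= x.
  have := hf x; rewrite /patch; case: ifP => _; rewrite ?lee_fin //.
    by move=> hk; rewrite ler_pdivrMl.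
  by move=> hk; rewrite pmulr_rle0 ?invr_gt0.
Qed.

Lemma lint_add (D : set T) (mD : measurable D) (g h : T -> R) :
  measurable_fun D g -> (forall x, D x -> 0 <= g x)%R ->
  (forall x, D x -> 0 <= h x)%R ->
  \int[mu]_(x in D) (g x + h x)%:E <=
  \int[mu]_(x in D) (g x)%:E + \int[mu]_(x in D) (h x)%:E.
Proof.
move=> mg g0 h0.
rewrite [X in _ <= X + _]integral_mkcond [X in _ <= _ + X]integral_mkcond.
rewrite !restrict_EFin.
rewrite ge0_integralE; last by move=> x Dx; rewrite lee_fin addr_ge0 ?g0 ?h0.
apply: ge_ereal_sup => _ [s /= hs <-].
set gD := g \_ D; set hD := h \_ D.
pose k x := Order.max (s x - gD x)%R 0%R.
have mgD : measurable_fun setT gD by apply/(measurable_restrictT _ mD).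
have mk : measurable_fun setT k.
  apply: (measurable_maxr (f := fun x => (s x - gD x)%R) (g := cst 0%R)) => //.
  by apply: measurable_funB.
have gD0 x : (0 <= gD x)%R.
  by rewrite /gD /patch; case: ifP => // /[!inE] /g0.
have k0 x : (0 <= k x)%R by rewrite /k le_max lexx orbT.
have -> : sintegral mu s = \int[mu]_x (s x)%:E.
  by rewrite integral_nnsfun // patch_setT.
apply: (@le_trans _ _ (\int[mu]_x (gD x + k x)%:E)).
  apply: ge0_le_integral => //.
  - by move=> x _; rewrite lee_fin.
  - by apply/measurable_EFinP.
  - by apply/measurable_EFinP; apply: measurable_funD.
  - by move=> x _; rewrite lee_fin -lerBlDl /k le_max lexx.
rewrite (eq_integral (fun x => (gD x)%:E + (k x)%:E)) //.
rewrite ge0_integralD //; try (by move=> x _; rewrite lee_fin);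
  try (by apply/measurable_EFinP).
apply: leeD => //.
apply: lint_le => [x _|x _]; first by rewrite lee_fin.
have := hs x; rewrite /k /gD /hD /patch; case: ifP => Dx H; rewrite lee_fin.
  rewrite ge_max; apply/andP; split; last by apply: h0; rewrite inE in Dx.
  by rewrite lerBlDl; rewrite lee_fin in H.
by rewrite ge_max subr0 lexx andbT; rewrite lee_fin in H.
Qed.
End L.

Section H.
Variable R : realType.

Lemma norm_rnorm {V : normedModType R[i]} (v : V) : `|v| = (rnorm v)%:C.
Proof.
rewrite /rnorm; have := ger0_Im (normr_ge0 v).
by case: (`|v|) => a b /= ->.
Qed.

Lemma rnorm_ge0 {V : normedModType R[i]} (v : V) : 0 <= rnorm v.
Proof. by rewrite -ler0c -norm_rnorm. Qed.

Lemma rnormZ {V : normedModType R[i]} (c : R[i]) (v : V) :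
  rnorm (c *: v) = rnorm (c : Cx R) * rnorm v.
Proof.
rewrite {1}/rnorm normrZ (norm_rnorm v).
have -> : `|c| = (rnorm (c : Cx R))%:C by rewrite -norm_rnorm.
by rewrite /= mulr0 subr0.
Qed.

Lemma rnormD {V : normedModType R[i]} (v w : V) : rnorm (v + w) <= rnorm v + rnorm w.
Proof.
by rewrite -lecR rmorphD /= -!norm_rnorm ler_normD.
Qed.

Lemma rnormB {V : normedModType R[i]} (v w : V) : `|rnorm v - rnorm w| <= rnorm (v - w).
Proof.
have h1 := rnormD (w - v) v; have h2 := rnormD (v - w) w.
rewrite !subrK in h1 h2.
have e : rnorm (w - v) = rnorm (v - w) by rewrite /rnorm -normrN opprB.
rewrite e in h1; rewrite ler_norml; apply/andP; split; lra.
Qed.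

Lemma powR_convex2 (x y p : R) : 1 <= p -> 0 <= x -> 0 <= y ->
  (x + y) `^ p <= 2 `^ (p - 1) * (x `^ p + y `^ p).
Proof.
move=> p1 x0 y0.
have h2 : (0:R) <= 2^-1 by rewrite invr_ge0.
have h21 : (2^-1 : R) <= 1 by rewrite invf_le1 ?ler1n.
have := @convex_powR R p p1 (Itv01 h2 h21) (2 * x) (2 * y).
rewrite !inE /= !in_itv /= !andbT !mulr_ge0 // => /(_ isT isT).
rewrite [X in X `^ p <= _ -> _](_ : _ = x + y); last first.
  transitivity (2^-1 * (2 * x) + (1 - 2^-1) * (2 * y)); first by [].
  rewrite !mulrA mulVf ?pnatr_eq0// mulrBl mul1r mulVf ?pnatr_eq0//.
  lra.
move=> H.
have {}H : (x+y)`^p <= 2^-1 * (2*x)`^p + (1 - 2^-1) * (2*y)`^p := H.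
apply: (le_trans H).
have e : 1 - 2^-1 = 2^-1 :> R by rewrite {1}(splitr 1) div1r addrK.
rewrite e !powRM // !mulrA -mulrDr -powR_inv1 // -powRD; last first.
  by rewrite pnatr_eq0 implybT.
by rewrite addrC.
Qed.


Lemma bnorm_scale {V : normedModType R[i]} (th q : R) (a : Cx R -> Cx R) (w : V) :
  0 < q -> (bergman_int th q a < +oo)%E ->
  bnorm th q (fun z => a z *: w) <= bnorm th q a * rnorm w.
Proof.
move=> q0 fin; rewrite /bnorm.
have I0 : (0 <= bergman_int th q a)%E.
  by apply: integral_ge0 => ? _; rewrite lee_fin powR_ge0.
have J0 : (0 <= bergman_int th q (fun z => a z *: w))%E.
  by apply: integral_ge0 => ? _; rewrite lee_fin powR_ge0.
have Hle : (bergman_int th q (fun z => a z *: w) <=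
            (rnorm w `^ q)%:E * bergman_int th q a)%E.
  rewrite /bergman_int.
  under eq_integral => z _ do rewrite rnormZ powRM ?rnorm_ge0 // mulrC.
  by apply: lint_scale => //; [exact: powR_ge0|move=> ? _; exact: powR_ge0].
move: Hle I0 J0 fin.
set I := bergman_int th q a; set J := bergman_int _ _ _ => Hle I0 J0 fin.
have Ifin : I \is a fin_num by rewrite ge0_fin_numE.
have Jfin : J \is a fin_num.
  rewrite ge0_fin_numE //; apply: (le_lt_trans Hle).
  by rewrite -(fineK Ifin) -EFinM ltry.
have Jle : fine J <= rnorm w `^ q * fine I.
  by rewrite -lee_fin fineK // EFinM fineK.
apply: (le_trans (ge0_ler_powR _ _ _ Jle)).
- by rewrite invr_ge0 ltW.
- by rewrite nnegrE fine_ge0.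
- by rewrite nnegrE mulr_ge0 ?powR_ge0 ?fine_ge0.
rewrite powRM ?powR_ge0 ?fine_ge0 // -powRrM mulfV ?gt_eqF // powRr1 ?rnorm_ge0 //.
by rewrite mulrC.
Qed.


Lemma holo_cont {V : normedModType R[i]} (g : Cx R -> V) (z0 : Cx R) :
  (exists l : V, cdiffquot g z0 @ (0 : Cx R)^' --> l) ->
  (fun h : Cx R => g (z0 + h)) @ (0 : Cx R) --> g z0.
Proof.
move=> [l hl].
have E : (fun h : Cx R => g (z0 + h)) = (fun h => g z0 + h *: cdiffquot g z0 h).
  apply/funext => h; rewrite /cdiffquot; have [->|h0] := eqVneq h 0.
    by rewrite scale0r !addr0.
  by rewrite scalerA mulfV // scale1r [RHS]addrC subrK.
pose G := fun h : Cx R => g z0 + h *: cdiffquot g z0 h.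
suff HG : G @ (0:Cx R) --> G 0 by move: HG; rewrite /G scale0r addr0 -E.
apply: (continuous_withinNx G 0).2.
rewrite /G scale0r addr0 -[X in _ --> X]addr0.
apply: cvgD; first exact: cvg_cst.
rewrite -(scale0r l).
apply: cvgZ => //.
exact: nbhs_dnbhs.
Qed.

Lemma normcR (x : R) : `|(x%:C : R[i])| = `|x|%:C.
Proof. by rewrite normc_def /= expr0n /= addr0 sqrtr_sqr. Qed.

Lemma real_cvg (t0 : R) : (fun t : R => ((t - t0)%:C : Cx R)) @ t0 --> (0 : Cx R).
Proof.
apply/cvgrPdist_lt => eps eps0.
move: eps0; rewrite ltcE => /andP[/eqP Ie Re0].
have H := (@cvgrPdist_lt _ _ _ (nbhs t0) _ id t0).1 cvg_id (complex.Re eps) Re0.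
have -> : eps = (complex.Re eps)%:C by case: eps Ie {H Re0} => a b /= ->.
near=> t.
rewrite sub0r normrN normcR ltcR -normrN opprB.
near: t; exact: H.
Unshelve. all: by end_near.
Qed.

Lemma cont_rnorm {V : normedModType R[i]} (g : Cx R -> V) (t0 : R) :
  (exists l : V, cdiffquot g (t0%:C) @ (0 : Cx R)^' --> l) ->
  {for t0, continuous (fun t : R => rnorm (g t%:C))}.
Proof.
move=> hol; have hc := holo_cont g (t0%:C) hol.
apply/cvgrPdist_lt => e e0.
have e0C : (0 : R[i]) < e%:C by rewrite ltcR.
have H := (cvgrPdist_lt _ _).1 hc _ e0C.
have H3 : \forall t \near t0, `|g t0%:C - g (t0%:C + (t - t0)%:C)| < e%:C
  := real_cvg t0 _ (H _).
near=> t.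
apply: le_lt_trans (rnormB _ _) _.
rewrite -ltcR -norm_rnorm.
have -> : (t%:C : Cx R) = t0%:C + (t - t0)%:C.
  by apply/eqP; rewrite eq_complex /= addr0 eqxx andbT addrC subrK.
near: t; exact: H3.
Unshelve. all: by end_near.
Qed.

Lemma meas_u {V : normedModType R[i]} (g : Cx R -> V) (th alpha p : R) :
  0 < th -> holomorphic_on (sector th) g ->
  measurable_fun [set` `[0, alpha]] (fun t : R => rnorm (g t%:C) `^ p).
Proof.
move=> th0 hol.
suff M : measurable_fun [set` `[0, alpha]] (fun t : R => rnorm (g t%:C)).
  exact: (measurableT_comp (measurable_powR p) M).
apply: (measurable_funS (E := [set 0] `|` `]0, alpha + 1[)).
- by apply: measurableU; [exact: measurable_set1|exact: measurable_itv].
- move=> t /=; rewrite in_itv /= => /andP[t0 ta].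
  have [->|tn0] := eqVneq t 0; first by left.
  right; rewrite /= in_itv /= lt_def tn0 t0 /=.
  by apply: (le_lt_trans ta); rewrite ltrDl.
apply: (proj2 (measurable_funU _ (measurable_set1 0) (measurable_itv `]0, alpha + 1[))); split.
- exact: measurable_fun_set1.
- apply: open_continuous_measurable_fun; first exact: itv_open.
  move=> t; rewrite inE /= in_itv /= => /andP[t0 _].
  apply: cont_rnorm; apply: hol.
  exists t, 0; split => //; split; first by rewrite normr0.
  by rewrite cos0 sin0 mulr1 mulr0.
Qed.

End H.

Theorem lemma3p4 (R : realType) (X : completeNormedModType R[i])
  (p q th : R) (T : R -> X -> X) (DA : set X) (A F : X -> X)
  (a : Cx R -> Cx R) :
  1 < p -> 1 < q -> 0 < th -> th <= pi / 2 ->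
  C0_semigroup T -> generator T DA A ->
  in_bergman th q a -> bounded_on_graph DA A F ->
  forall alpha gamma : R, 0 < alpha -> 0 <= gamma ->
  (forall x, DA x ->
     (\int[@lebesgue_measure R]_(t in [set` `[0%R, alpha]%R])
        ((rnorm (F (T t x))) `^ p)%:E
      <= (gamma `^ p * rnorm x `^ p)%:E)%E) ->
  forall (x : X) (f : Cx R -> X), DA x -> in_dom_ddz th q f ->
  (\int[@lebesgue_measure R]_(t in [set` `[0%R, alpha]%R])
      ((st_norm th q (Pcal a F (Tcal T t (x, f)))) `^ p)%:E
   <= (2 `^ (p - 1))%:E *
      ((bnorm th q a `^ p * gamma `^ p * rnorm x `^ p)%:E
       + \int[@lebesgue_measure R]_(t in [set` `[0%R, alpha]%R])
           ((rnorm (f t%:C)) `^ p)%:E))%E.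
Proof.
move=> p1 q1 th0 thpi sg gen [holA finA] bF alpha gamma a0 g0 hyp x f Dx [[holf _] _].
set D := [set` `[0%R, alpha]%R].
have mD : measurable D by exact: measurable_itv.
set b := bnorm th q a.
have b0 : 0 <= b by rewrite /b /bnorm powR_ge0.
pose u t := rnorm (f t%:C) `^ p.
pose v t := rnorm (F (T t x)) `^ p.
have q0 : 0 < q by apply: lt_trans q1.
have p0 : 0 < p by apply: lt_trans p1.
have p1' : 1 <= p := ltW p1.
have pt t : (st_norm th q (Pcal a F (Tcal T t (x, f)))) `^ p <=
            2 `^ (p - 1) * (u t + b `^ p * v t).
  change ((rnorm (f (t%:C + 0)) + bnorm th q (fun z => a z *: F (T t x))) `^ p
    <= 2 `^ (p - 1) * (u t + b `^ p * v t)).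
  rewrite [t%:C + 0]addr0.
  apply: (@le_trans _ _ ((rnorm (f t%:C) + b * rnorm (F (T t x))) `^ p)).
    apply: ge0_ler_powR; first exact: ltW.
    - rewrite nnegrE; apply: addr_ge0; [exact: rnorm_ge0|exact: powR_ge0].
    - rewrite nnegrE; apply: addr_ge0; first exact: rnorm_ge0.
      by apply: mulr_ge0; [exact: b0|exact: rnorm_ge0].
    - rewrite lerD2l; exact: bnorm_scale.
  rewrite /u /v -powRM; [|exact: b0|exact: rnorm_ge0].
  apply: powR_convex2; [exact: p1'|exact: rnorm_ge0|].
  by apply: mulr_ge0; [exact: b0|exact: rnorm_ge0].
apply: (@le_trans _ _ (\int[@lebesgue_measure R]_(t in D)
           (2 `^ (p - 1) * (u t + b `^ p * v t))%:E)%E).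
  apply: lint_le => t _; first by rewrite lee_fin powR_ge0.
  by rewrite lee_fin.
have uv0 : forall t, D t -> 0 <= u t + b `^ p * v t.
  by move=> t _; apply: addr_ge0; [exact: powR_ge0|apply: mulr_ge0; exact: powR_ge0].
apply: le_trans; first (apply: lint_scale; [exact: powR_ge0|exact: uv0]).
apply: lee_wpmul2l; first by rewrite lee_fin powR_ge0.
have u0 : forall t, D t -> 0 <= u t by move=> t _; exact: powR_ge0.
have bv0 : forall t, D t -> 0 <= b `^ p * v t.
  by move=> t _; apply: mulr_ge0; exact: powR_ge0.
apply: le_trans.
  apply: (lint_add (mu := @lebesgue_measure R) D _ u (fun t => b `^ p * v t));
    try (exact: mD); try (exact: (meas_u _ f th alpha p th0 holf));
    try (exact: u0); try (exact: bv0).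
rewrite addeC; apply: leeD => //.
have v0 : forall t, D t -> 0 <= v t by move=> t _; exact: powR_ge0.
apply: le_trans; first (apply: lint_scale; [exact: powR_ge0|exact: v0]).
rewrite -mulrA EFinM; apply: lee_wpmul2l; first by rewrite lee_fin powR_ge0.
exact: hyp.
Qed.
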